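(* Let $A$ be an aggregation function having $1$ as a (two-sided) neutral element, let $I_A(x,y)=\sup\{t\in[0,1]\mid A(x,t)\le y\}$ be the R-implication generated by $A$, and let $A'$ be a conjunctor having $1$ as a left neutral element. Suppose $I_A$ satisfies the ordering property $I_A(x,y)=1\iff x\le y$ and the exchange principle $I_A(x,I_A(y,z))=I_A(y,I_A(x,z))$ for all $x,y,z\in[0,1]$. Then $I_A$ satisfies (A5) with $A'$ if and only if $A'\le A^*$, where $$A^*(x,y)=\begin{cases}\sup\{A(u,v)\mid u<x,\ v<y\}& x,y\in(0,1),\\ A(x,y)&\text{otherwise.}\end{cases}$$
   Context: An aggregation function is a map $A:[0,1]^2\to[0,1]$, non-decreasing in each variable, with $A(0,0)=0$, $A(1,1)=1$; it is a conjunctor if moreover $A(1,0)=A(0,1)=0$. $1$ is a neutral element if $A(1,x)=A(x,1)=x$ for all $x$, and a left neutral element if $A(1,x)=x$ for all $x$. $A'\le A^*$ means pointwise inequality. A fuzzy set on a nonempty set $U$ is a map $U\to[0,1]$; it is normal if it attains the value $1$. ''$I$ satisfies (A5) with $A'$'' means: for all nonempty sets $U,V$, all normal fuzzy sets $D$ on $U$, $B$ on $V$, and every $y\in V$, $\sup_{x\in U}A'(D(x),I(D(x),B(y)))=B(y)$. *)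

(* Defs.v *)
From Stdlib Require Import Reals.
Open Scope R_scope.

Definition unit01 (x : R) : Prop := 0 <= x <= 1.

(* aggregation function on [0,1]^2 (values outside [0,1]^2 are irrelevant) *)
Definition aggregation (A : R -> R -> R) : Prop :=
  (forall x y, unit01 x -> unit01 y -> unit01 (A x y)) /\
  (forall x1 x2 y, unit01 x1 -> unit01 x2 -> unit01 y -> x1 <= x2 -> A x1 y <= A x2 y) /\
  (forall x y1 y2, unit01 x -> unit01 y1 -> unit01 y2 -> y1 <= y2 -> A x y1 <= A x y2) /\
  A 0 0 = 0 /\ A 1 1 = 1.

Definition conjunctor (A : R -> R -> R) : Prop :=
  aggregation A /\ A 1 0 = 0 /\ A 0 1 = 0.

Definition neutral_one (A : R -> R -> R) : Prop :=
  forall x, unit01 x -> A 1 x = x /\ A x 1 = x.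

Definition left_neutral_one (A : R -> R -> R) : Prop :=
  forall x, unit01 x -> A 1 x = x.

Definition is_R_implication (A I : R -> R -> R) : Prop :=
  forall x y, unit01 x -> unit01 y ->
    is_lub (fun t => unit01 t /\ A x t <= y) (I x y).

Definition is_Astar (A Astar : R -> R -> R) : Prop :=
  forall x y, unit01 x -> unit01 y ->
    ((0 < x < 1 /\ 0 < y < 1) ->
       is_lub (fun z => exists u v, unit01 u /\ unit01 v /\ u < x /\ v < y /\ z = A u v)
              (Astar x y)) /\
    (~ (0 < x < 1 /\ 0 < y < 1) -> Astar x y = A x y).

Definition ordering_property (I : R -> R -> R) : Prop :=
  forall x y, unit01 x -> unit01 y -> (I x y = 1 <-> x <= y).

Definition exchange_principle (I : R -> R -> R) : Prop :=
  forall x y z, unit01 x -> unit01 y -> unit01 z -> I x (I y z) = I y (I x z).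

Definition fuzzy_set (U : Type) (D : U -> R) : Prop := forall u, unit01 (D u).
Definition normal_fs (U : Type) (D : U -> R) : Prop := exists u, D u = 1.

Definition satisfies_A5 (I A' : R -> R -> R) : Prop :=
  forall (U V : Type), inhabited U -> inhabited V ->
  forall (D : U -> R) (B : V -> R),
    fuzzy_set U D -> normal_fs U D -> fuzzy_set V B -> normal_fs V B ->
    forall y : V,
      is_lub (fun z => exists x : U, z = A' (D x) (I (D x) (B y))) (B y).

Definition le_fun2 (F G : R -> R -> R) : Prop :=
  forall x y, unit01 x -> unit01 y -> F x y <= G x y.

(* Main.v *)
Require Import Defs.
From Stdlib Require Import Reals Lra Classical.
Open Scope R_scope.

Section S.
Variables (A I A' Astar : R -> R -> R).
Hypotheses (HA : aggregation A) (HN : neutral_one A) (HI : is_R_implication A I)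
  (HC : conjunctor A') (HL : left_neutral_one A') (HO : ordering_property I)
  (HE : exchange_principle I) (HS : is_Astar A Astar).

Lemma I01 a b : unit01 a -> unit01 b -> unit01 (I a b).
Proof.
  intros Ha Hb. destruct (HI a b Ha Hb) as [Hu Hl].
  destruct HA as [H01 [Hm1 [Hm2 [H00 H11]]]].
  assert (A a 0 <= 0).
  { destruct (HN 0) as [H1 _]. unfold unit01; lra.
    rewrite <- H1 at 2. apply Hm1; unfold unit01 in *; lra. }
  split.
  - apply Hu. unfold unit01 in *; split; lra.
  - apply Hl. intros t [Ht _]. unfold unit01 in Ht; lra.
Qed.

Lemma I1 b : unit01 b -> I 1 b = b.
Proof.
  intros Hb. assert (H1: unit01 1) by (unfold unit01; lra).
  destruct (HI 1 b H1 Hb) as [Hu Hl].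
  apply Rle_antisym.
  - apply Hl. intros t [Ht Ht2]. destruct (HN t Ht) as [E _]. lra.
  - apply Hu. split; auto. destruct (HN b Hb) as [E _]. lra.
Qed.

Lemma below_I a b v : unit01 a -> unit01 b -> unit01 v -> v < I a b -> A a v <= b.
Proof.
  intros Ha Hb Hv Hlt. destruct (HI a b Ha Hb) as [Hu Hl].
  destruct HA as [H01 [Hm1 [Hm2 [H00 H11]]]].
  destruct (classic (exists s, (unit01 s /\ A a s <= b) /\ v < s)) as [[s [[Hs Hs2] Hvs]]|Hn].
  - eapply Rle_trans; [|exact Hs2]. apply Hm2; auto; lra.
  - exfalso. assert (I a b <= v); [|lra].
    apply Hl. intros s Hs. destruct (Rle_dec s v); auto.
    exfalso; apply Hn; exists s; split; auto; lra.
Qed.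

Lemma exch a b c : unit01 a -> unit01 b -> unit01 c -> a <= I b c -> b <= I a c.
Proof.
  intros Ha Hb Hc H.
  pose proof (I01 b c Hb Hc). pose proof (I01 a c Ha Hc).
  apply (proj2 (HO a (I b c) Ha H0)) in H. rewrite HE in H by auto.
  apply (proj1 (HO b (I a c) Hb H1)). auto.
Qed.

Lemma suff_A5 : (forall a b, unit01 a -> unit01 b -> A' a (I a b) <= b) -> satisfies_A5 I A'.
Proof.
  intros K U V _ _ D B HD [u0 Hu0] HB _ y. split.
  - intros z [x ->]. apply K; auto.
  - intros m Hm. apply Hm. exists u0. rewrite Hu0, I1 by auto.
    rewrite HL; auto.
Qed.

Lemma nec_A5 : satisfies_A5 I A' -> (forall a b, unit01 a -> unit01 b -> A' a (I a b) <= b).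
Proof.
  intros H a b Ha Hb.
  assert (F1 : fuzzy_set bool (fun x : bool => if x then 1 else a)).
  { intros []; unfold unit01 in *; lra. }
  assert (F2 : normal_fs bool (fun x : bool => if x then 1 else a)) by (exists true; auto).
  assert (F3 : fuzzy_set bool (fun x : bool => if x then b else 1)).
  { intros []; unfold unit01 in *; lra. }
  assert (F4 : normal_fs bool (fun x : bool => if x then b else 1)) by (exists false; auto).
  destruct (H bool bool (inhabits true) (inhabits true) _ _ F1 F2 F3 F4 true) as [Hu _].
  apply Hu. exists false. simpl. reflexivity.
Qed.

Lemma case_split x y : unit01 x -> unit01 y -> ~ (0 < x < 1 /\ 0 < y < 1) ->
  x = 0 \/ x = 1 \/ y = 0 \/ y = 1.
Proof.
  unfold unit01; intros. destruct (Req_dec x 0); auto. destruct (Req_dec x 1); auto.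
  destruct (Req_dec y 0); auto. destruct (Req_dec y 1); auto. exfalso; apply H1; lra.
Qed.

Theorem main : satisfies_A5 I A' <-> le_fun2 A' Astar.
Proof.
  destruct HA as [H01 [Hm1 [Hm2 [H00 H11]]]].
  destruct HC as [[C01 [Cm1 [Cm2 [C00 C11]]]] [C10 C01']].
  assert (U0 : unit01 0) by (unfold unit01; lra).
  assert (U1 : unit01 1) by (unfold unit01; lra).
  split.
  - intros H5. pose proof (nec_A5 H5) as K. intros x y Hx Hy.
    destruct (HS x y Hx Hy) as [Hint Hext].
    destruct (classic (0 < x < 1 /\ 0 < y < 1)) as [Hi|Hi].
    + specialize (Hint Hi). set (s := Astar x y) in *.
      destruct Hint as [Hu Hl].
      assert (Hs : unit01 s).
      { split.
        - apply Hu. exists 0, 0. repeat split; try lra; auto; rewrite H00; auto.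
        - apply Hl. intros z [u [v [Hu' [Hv' [_ [_ ->]]]]]]. apply H01; auto. }
      assert (Hxy : x <= I y s).
      { pose proof (I01 y s Hy Hs) as Hys.
        assert (forall u, unit01 u -> u < x -> u <= I y s).
        { intros u Hu' Hux. apply exch; auto.
          pose proof (I01 u s Hu' Hs) as Hus.
          destruct (Rle_dec y (I u s)) as [|Hn]; auto. exfalso.
          set (v := (I u s + y) / 2).
          assert (Hv : unit01 v) by (unfold v, unit01 in *; lra).
          destruct (HI u s Hu' Hs) as [Hu2 _].
          assert (v <= I u s); [|unfold v in *; lra].
          apply Hu2. split; auto. apply Hu. exists u, v.
          repeat split; unfold v, unit01 in *; try lra. }
        destruct (Rle_dec x (I y s)) as [|Hn]; auto. exfalso.
        assert ((I y s + x)/2 <= I y s); [|lra].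
        apply H; unfold unit01 in *; lra. }
      apply exch in Hxy; auto.
      eapply Rle_trans; [|apply (K x s Hx Hs)].
      apply Cm2; auto. apply I01; auto.
    + rewrite (Hext Hi).
      destruct (case_split x y Hx Hy Hi) as [ -> | [ -> | [ -> | -> ] ] ].
      * apply Rle_trans with (A' 0 1). apply Cm2; auto; unfold unit01 in *; lra.
        rewrite C01'. apply H01; auto.
      * rewrite HL by auto. destruct (HN y Hy) as [E _]; lra.
      * apply Rle_trans with (A' 1 0). apply Cm1; auto; unfold unit01 in *; lra.
        rewrite C10. apply H01; auto.
      * destruct (HN x Hx) as [_ E]. rewrite E.
        pose proof (K x x Hx Hx). rewrite (proj2 (HO x x Hx Hx)) in H; auto; lra.
  - intros Hle. apply suff_A5. intros a b Ha Hb.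
    set (t := I a b). pose proof (I01 a b Ha Hb) as Ht. fold t in Ht.
    destruct (HS a t Ha Ht) as [Hint Hext].
    destruct (classic (0 < a < 1 /\ 0 < t < 1)) as [Hi|Hi].
    + eapply Rle_trans. apply Hle; auto.
      destruct (Hint Hi) as [_ Hl]. apply Hl.
      intros z [u [v [Hu [Hv [Hua [Hvt ->]]]]]].
      eapply Rle_trans; [|apply (below_I a b v Ha Hb Hv Hvt)].
      apply Hm1; auto; lra.
    + destruct (case_split a t Ha Ht Hi) as [E|[E|[E|E]]].
      * rewrite E. apply Rle_trans with (A' 0 1). apply Cm2; auto; unfold unit01 in *; lra.
        rewrite C01'. unfold unit01 in Hb; lra.
      * unfold t. rewrite E, I1 by auto. rewrite HL; auto; lra.
      * rewrite E. apply Rle_trans with (A' 1 0). apply Cm1; auto; unfold unit01 in *; lra.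
        rewrite C10. unfold unit01 in Hb; lra.
      * assert (a <= b) by (apply (HO a b Ha Hb); auto).
        eapply Rle_trans. apply Hle; auto. rewrite (Hext Hi), E. destruct (HN a Ha) as [_ E2]. lra.

Qed.
End S.

Theorem theorem4p6 (A I A' Astar : R -> R -> R) :
  aggregation A -> neutral_one A ->
  is_R_implication A I ->
  conjunctor A' -> left_neutral_one A' ->
  ordering_property I -> exchange_principle I ->
  is_Astar A Astar ->
  (satisfies_A5 I A' <-> le_fun2 A' Astar).
Proof.
  intros. eapply main; eauto.
Qed.
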